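(* Let $V=\mathbb{C}^n$ be the defining representation of $GL_n(\mathbb{C})$ and $k_1,\dots,k_m\ge 0$. Let $\mu=(\mu_1,\dots,\mu_\ell)$ be a partition of $k_1+\dots+k_m$ with at most $n$ parts. Then the dimension of the space of $S_n$-invariants in the symmetrized weight space $(\mathrm{Sym}^{k_1}(V)\otimes\dots\otimes\mathrm{Sym}^{k_m}(V))_{\bar\mu}$ equals the number of multiset partitions of $\{1^{k_1},2^{k_2},\dots,m^{k_m}\}$ with parts of sizes $\mu_1,\dots,\mu_\ell$. In particular, the dimension of the space of $S_n$-invariants in $\mathrm{Sym}^{k_1}(V)\otimes\dots\otimes\mathrm{Sym}^{k_m}(V)$ equals the number of multiset partitions of $\{1^{k_1},2^{k_2},\dots,m^{k_m}\}$ with at most $n$ parts.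
   Context: $S_n\subset GL_n(\mathbb{C})$ is the subgroup of permutation matrices and $T$ the diagonal torus. For a representation $W$ of $GL_n$ and a weight $\mu$ of $T$ (here $\mu$ is padded with zeros to length $n$), the symmetrized weight space $W_{\bar\mu}$ is the direct sum of the $T$-weight spaces of $W$ for all weights in the $S_n$-orbit of $\mu$; it is stable under $S_n$. A multiset partition of a multiset $M$ is a multiset of nonempty sub-multisets (parts) of $M$ whose multiplicities add up to those of $M$; the size of a part is its cardinality counted with multiplicity. $\{1^{k_1},\dots,m^{k_m}\}$ is the multiset containing $i$ with multiplicity $k_i$. *)

(* Defs.v *)
From HB Require Import structures.
From mathcomp Require Import all_boot all_order all_algebra all_fingroup all_field.
Set Implicit Arguments. Unset Strict Implicit. Unset Printing Implicit Defensive.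
Import GRing.Theory.
Local Open Scope ring_scope.

(* Model of W = Sym^{k_1}(V) ⊗ ... ⊗ Sym^{k_m}(V), V = C^n (C = algC).
   Sym^{k}(C^n) = homogeneous polynomials of degree k in x_1..x_n, with the
   monomial basis x^a (a : exponent vector, |a| = k).  The tensor product has
   basis the m-tuples of monomials.  All of this is realized inside the
   finite-dimensional space of functions on a finite index type large enough
   to contain all these basis tuples (exponents are bounded by K = sum k). *)

Section Model.
Variables (n m : nat) (k : 'I_m -> nat).

Definition Ktot : nat := (\sum_(i < m) k i)%N.

(* exponent vectors of monomials in x_1..x_n *)
Definition Mono := {ffun 'I_n -> 'I_(Ktot.+1)}.
Definition TBasis := {ffun 'I_m -> Mono}.

Definition mdeg (a : Mono) : nat := (\sum_(j < n) (a j : nat))%N.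
(* b is a basis vector x^{b 0} ⊗ ... ⊗ x^{b (m-1)} of W *)
Definition in_basis (b : TBasis) : bool := [forall i, mdeg (b i) == k i].
(* T-weight of the basis vector b: diag(t) acts by prod_j t_j^(weight b j) *)
Definition weight (b : TBasis) (j : 'I_n) : nat := (\sum_(i < m) (b i j : nat))%N.

Definition Vec := {ffun TBasis -> algC^o}.
Definition delta (b : TBasis) : Vec := [ffun b' => (b' == b)%:R].

Definition symtensor : {vspace Vec} :=
  <<[seq delta b | b <- enum TBasis & in_basis b]>>%VS.

Definition wspace (lam : 'I_n -> nat) : {vspace Vec} :=
  <<[seq delta b | b <- enum TBasis & in_basis b && [forall j, weight b j == lam j]]>>%VS.

Definition padded (mu : seq nat) (j : 'I_n) : nat := nth 0%N mu j.

(* symmetrized weight space: sum of W_lambda over lambda in the S_n-orbit of mu *)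
Definition symweight (mu : seq nat) : {vspace Vec} :=
  (\sum_(s : 'S_n) wspace (fun j => padded mu (s j)))%VS.

(* Permutation matrix of s (e_j |-> e_{s j}) acting on monomials:
   x_j |-> x_{s j}, so x^a |-> x^{a o s^-1}. *)
Definition permB (s : 'S_n) (b : TBasis) : TBasis :=
  [ffun i => [ffun j => b i ((s^-1)%g j)]].

Definition actS (s : 'S_n) : 'End(Vec) :=
  linfun (fun f : Vec => [ffun b => f (permB (s^-1)%g b)] : Vec).

Definition invariants (U : {vspace Vec}) : {vspace Vec} :=
  (U :&: \bigcap_(s : 'S_n) fixedSpace (actS s))%VS.

(* A sub-multiset ("part") is given by its multiplicity function on 'I_m;
   a multiset partition is a multiset of parts, i.e. a multiplicity function
   on parts. Multiplicities are bounded by K = |M|. *)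
Definition Part := {ffun 'I_m -> 'I_(Ktot.+1)}.
Definition psize (p : Part) : nat := (\sum_(i < m) (p i : nat))%N.
Definition MPart := {ffun Part -> 'I_(Ktot.+1)}.

Definition is_msetpart (c : MPart) : bool :=
  [forall p : Part, (psize p == 0)%N ==> ((c p : nat) == 0)%N] &&
  [forall i : 'I_m, (\sum_(p : Part) (c p : nat) * (p i : nat) == k i)%N].

Definition has_sizes (mu : seq nat) (c : MPart) : bool :=
  [forall s : 'I_(Ktot.+1),
     (\sum_(p : Part | psize p == s) (c p : nat) == count_mem (s : nat) mu)%N].

Definition nparts (c : MPart) : nat := (\sum_(p : Part) (c p : nat))%N.

End Model.

(* Main.v *)
Require Import Defs.
From HB Require Import structures.
From mathcomp Require Import all_boot all_order all_algebra all_fingroup all_field.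
Set Implicit Arguments. Unset Strict Implicit. Unset Printing Implicit Defensive.
Import GRing.Theory.
Local Open Scope ring_scope.

Section VS.
Variables (n m : nat) (k : 'I_m -> nat).
Local Notation TB := (TBasis n k).
Local Notation Vc := (Vec n k).

Lemma deltaE (b b' : TB) : delta b b' = (b' == b)%:R.
Proof. by rewrite ffunE. Qed.

Lemma mem_spanP (P : pred TB) (f : Vc) :
  (f \in <<[seq delta b | b <- enum TB & P b]>>%VS) = [forall b, ~~ P b ==> (f b == 0)].
Proof.
apply/idP/idP.
  move=> fX; apply/forallP => b; apply/implyP => Pb.
  move: fX; rewrite -[X in <<X>>%VS]in_tupleE => /coord_span ->.
  rewrite sum_ffunE big1 // => i _; rewrite ffunE.
  have : (in_tuple [seq delta b | b <- enum TB & P b])`_i \in [seq delta b | b <- enum TB & P b].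
    by apply: mem_nth; exact: (ltn_ord i).
  case/mapP => b' ; rewrite mem_filter => /andP[Pb' _] ->.
  rewrite deltaE; case: eqP => [eb|]; last by rewrite scaler0.
  by rewrite eb Pb' in Pb.
move/forallP => H.
have -> : f = \sum_(b | P b) f b *: delta b.
  apply/ffunP => b; rewrite sum_ffunE.
  case Pb: (P b).
    rewrite (bigD1 b) //= big1 ?addr0 => [|b' /andP[_ nb]].
      by rewrite ffunE deltaE eqxx /=; exact: (esym (@mulr1 algC (f b))).
    by rewrite ffunE deltaE eq_sym (negbTE nb) scaler0.
  rewrite big1 => [|b' Pb'].
    by move: (H b); rewrite Pb /= => /eqP.
  rewrite ffunE deltaE; case: eqP => [eb|]; last by rewrite scaler0.
  by rewrite eb Pb' in Pb.
apply: memv_suml => b Pb; apply: rpredZ; apply: memv_span.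
by apply: map_f; rewrite mem_filter Pb mem_enum.
Qed.

Definition actF (s : 'S_n) (f : Vc) : Vc := [ffun b => f (permB (s^-1)%g b)].

Fact actF_lin s : linear (actF s).
Proof. by move=> a f g; apply/ffunP => b; rewrite !ffunE. Qed.
HB.instance Definition _ s := GRing.isLinear.Build _ _ _ _ (actF s) (actF_lin s).

Lemma actSE s f : actS k s f = actF s f.
Proof. exact: (lfunE (actF s)). Qed.

Lemma mem_invariants U (f : Vc) :
  (f \in invariants U) = (f \in U) && [forall s : 'S_n, forall b, f (permB s b) == f b].
Proof.
rewrite /invariants memv_cap; congr (_ && _).
apply/idP/idP.
  rewrite memvE => /subv_bigcapP H; apply/forallP => s; apply/forallP => b.
  have /(_ isT) := H (s^-1)%g; rewrite -memvE => /fixedSpaceP.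
  rewrite actSE => /ffunP /(_ b); rewrite ffunE invgK => ->; done.
move=> H; rewrite memvE; apply/subv_bigcapP => s _; rewrite -memvE.
apply/fixedSpaceP; rewrite actSE; apply/ffunP => b; rewrite ffunE.
by move/forallP: H => /(_ (s^-1)%g) /forallP /(_ b) /eqP.
Qed.


Lemma dim_inv (U : {vspace Vc}) (P : pred TB) (T : finType) (cm : TB -> T) :
 (forall f, (f \in U) = [forall b, ~~ P b ==> (f b == 0)]) ->
 (forall s b, P (permB s b) = P b) ->
 (forall s b, cm (permB s b) = cm b) ->
 (forall b b', P b -> P b' -> cm b = cm b' -> exists s, b' = permB s b) ->
 \dim (invariants U) = #|[set cm b | b in P]|.
Proof.
move=> HU HP Hcm Horb.
set V := [set cm b | b in P].
pose e v : Vc := [ffun b => (P b && (cm b == v))%:R].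
pose E := [seq e v | v <- enum V].
pose b0 : TB := [ffun => [ffun => ord0]].
pose r v := odflt b0 [pick b | P b && (cm b == v)].
have rP v : v \in V -> P (r v) /\ cm (r v) = v.
  case/imsetP => b Pb ->; rewrite /r; case: pickP => [b' /andP[? /eqP] //|].
  by move/(_ b); rewrite eqxx andbT => /negbT/negP[]; exact: Pb.
have einv v : e v \in invariants U.
  rewrite mem_invariants HU; apply/andP; split.
    by apply/forallP => b; apply/implyP => Pb; rewrite ffunE (negbTE Pb).
  by apply/forallP => s; apply/forallP => b; rewrite !ffunE HP Hcm.
have invE : invariants U = <<E>>%VS.
  apply/eqP; rewrite eqEsubv; apply/andP; split; last first.
    by apply/span_subvP => x /mapP[v _ ->].
  apply/subvP => f; rewrite mem_invariants HU => /andP[/forallP supp /forallP inv].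
  have -> : f = \sum_(v in V) f (r v) *: e v.
    apply/ffunP => b; rewrite sum_ffunE; case Pb: (P b).
      have Vb : cm b \in V by apply: imset_f.
      rewrite (bigD1 (cm b)) //= big1 ?addr0 => [|v /andP[_ nv]]; last first.
        by rewrite !ffunE Pb eq_sym (negbTE nv) scaler0.
      rewrite !ffunE Pb eqxx /=.
      have [Pr cr] := rP _ Vb.
      have [s ->] := Horb _ _ Pr Pb cr.
      move: (inv s) => /forallP /(_ (r (cm b))) /eqP ->.
      by rewrite Hcm cr -[RHS]/(_ * 1) mulr1.
    rewrite big1 => [|v _]; last by rewrite !ffunE Pb scaler0.
    by move: (supp b); rewrite Pb => /eqP.
  apply: memv_suml => v Vv; apply: rpredZ; apply: memv_span.
  by apply: map_f; rewrite mem_enum.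
rewrite invE.
have freeE : free (in_tuple E).
  apply/freeP => kk Hs i.
  have ltiV : (i < size (enum V))%N by rewrite -(size_map e); exact: ltn_ord.
  set vi := nth (cm b0) (enum V) i.
  have Vvi : vi \in V by rewrite -mem_enum mem_nth.
  have [Pr cr] := rP _ Vvi.
  move/ffunP: Hs => /(_ (r vi)); rewrite sum_ffunE ffunE.
  rewrite (bigD1 i) //= big1 ?addr0 => [|j nj].
    by rewrite (nth_map (cm b0)) // !ffunE Pr cr eqxx /= -[X in X = 0 -> _]/(_ * 1) mulr1.
  have ltjV : (j < size (enum V))%N by rewrite -(size_map e); exact: ltn_ord.
  rewrite (nth_map (cm b0)) // !ffunE Pr cr /=.
  have nj' : (nat_of_ord i == nat_of_ord j) = false by rewrite eq_sym; exact: (negbTE nj).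
  by rewrite /vi nth_uniq ?enum_uniq // nj' scaler0.
by rewrite (eqP freeE) /= size_map cardE.
Qed.

End VS.
Local Close Scope ring_scope.

Lemma count_enum (T : Type) n (f : 'I_n -> T) (a : pred T) :
  count a (map f (enum 'I_n)) = \sum_(j < n) a (f j).
Proof.
rewrite count_map -sum1_count big_enum_cond /= big_mkcond /=.
by apply: eq_bigr => j _; case: (a (f j)).
Qed.

Lemma sum_nth_pad (T : Type) (x0 : T) (a : pred T) (s : seq T) n :
  ~~ a x0 -> size s <= n -> \sum_(j < n) a (nth x0 s j) = count a s.
Proof.
move=> ax0; elim: s n => [|x s IH] [|n] //=.
- by rewrite big_ord0.
- by move=> _; rewrite big1 // => j _; rewrite nth_nil (negbTE ax0).
- rewrite ltnS => sn; rewrite big_ord_recl /=; congr (_ + _).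
  by rewrite -(IH n sn); apply: eq_bigr.
Qed.

Lemma perm_eq_but (T : eqType) (z : T) (s1 s2 : seq T) :
  size s1 = size s2 -> (forall x, x != z -> count_mem x s1 = count_mem x s2) ->
  perm_eq s1 s2.
Proof.
move=> ss H.
have Hf : perm_eq (filter (predC1 z) s1) (filter (predC1 z) s2).
  rewrite /perm_eq; apply/seq.allP => x _ /=; apply/eqP; rewrite !count_filter.
  case: (eqVneq x z) => [->|nx].
    by rewrite !(@eq_count _ _ pred0) ?count_pred0 // => y /=; rewrite andbN.
  by rewrite !(@eq_count _ _ (pred1 x)) ?H // => y /=; case: eqP => // ->; rewrite nx.
rewrite /perm_eq; apply/seq.allP => x _ /=; apply/eqP; case: (eqVneq x z) => [->|nx]; last by rewrite H.
have E s : count_mem z s = size s - size (filter (predC1 z) s).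
  by rewrite size_filter -(count_predC (pred1 z) s) addnK.
by rewrite !E ss (perm_size Hf).
Qed.

Lemma mem_le_sumn x s : x \in s -> x <= sumn s.
Proof.
elim: s => //= y s IH; rewrite inE => /orP[/eqP ->|/IH]; first exact: leq_addr.
by move/leq_trans; apply; rewrite leq_addl.
Qed.

Section Comb.
Variables (n m : nat) (k : 'I_m -> nat).
Local Notation TB := (TBasis n k).
Local Notation K := (Ktot k).
Local Notation PT := (Part k).

Definition row (b : TB) (j : 'I_n) : PT := [ffun i => b i j].
Definition cnt (r : 'I_n -> PT) (p : PT) : nat := \sum_(j < n) (r j == p).
Definition cm (b : TB) : MPart k :=
  [ffun p => inord (if psize p == 0 then 0 else cnt (row b) p)].
Definition p0 : PT := [ffun => ord0].

Lemma sum_rows (r : 'I_n -> PT) (F : PT -> nat) :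
  \sum_(j < n) F (r j) = \sum_(p : PT) cnt r p * F p.
Proof.
rewrite /cnt; under [RHS]eq_bigr do rewrite big_distrl /=.
rewrite exchange_big; apply: eq_bigr => j _.
rewrite (bigD1 (r j)) //= eqxx mul1n big1 ?addn0 // => p.
by rewrite eq_sym => /negbTE ->.
Qed.

Lemma sum_cnt (r : 'I_n -> PT) : \sum_(p : PT) cnt r p = n.
Proof.
have := sum_rows r (fun _ => 1); rewrite sum1_card card_ord => ->.
by apply: eq_bigr => p _; rewrite muln1.
Qed.

Lemma psize0 (p : PT) : (psize p == 0) = (p == p0).
Proof.
rewrite /psize sum_nat_eq0; apply/forallP/eqP => [H|-> i]; last by rewrite ffunE.
apply/ffunP => i; rewrite ffunE; apply/val_inj => /=.
exact/eqP/H.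
Qed.

Lemma le_psize (p : PT) i : (p i <= psize p)%N.
Proof. by rewrite /psize (bigD1 i) //= leq_addr. Qed.

Lemma row_permB s (b : TB) j : row (permB s b) j = row b ((s^-1)%g j).
Proof. by apply/ffunP => i; rewrite !ffunE. Qed.

Lemma sum_perm (s : 'S_n) (F : 'I_n -> nat) : \sum_(j < n) F (s j) = \sum_(j < n) F j.
Proof. by rewrite [RHS](reindex_inj (@perm_inj _ s)). Qed.

Lemma cnt_permB s (b : TB) p : cnt (row (permB s b)) p = cnt (row b) p.
Proof.
rewrite /cnt; under eq_bigr do rewrite row_permB.
exact: (sum_perm (s^-1)%g (fun j => (row b j == p) : nat)).
Qed.

Lemma cm_permB s (b : TB) : cm (permB s b) = cm b.
Proof. by apply/ffunP => p; rewrite !ffunE cnt_permB. Qed.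

Lemma psize_row (b : TB) j : psize (row b j) = weight b j.
Proof. by apply: eq_bigr => i _; rewrite ffunE. Qed.

Lemma sum_weight (b : TB) : \sum_(j < n) weight b j = \sum_(i < m) mdeg (b i).
Proof. by rewrite exchange_big. Qed.

Lemma cnt_le (b : TB) p : in_basis b -> psize p != 0 -> cnt (row b) p <= K.
Proof.
move=> /forallP Hb np.
apply: (@leq_trans (cnt (row b) p * psize p)); first by rewrite leq_pmulr // lt0n.
apply: (@leq_trans (\sum_(q : PT) cnt (row b) q * psize q)).
  by rewrite (bigD1 p) //= leq_addr.
rewrite -sum_rows; under eq_bigr do rewrite psize_row.
rewrite sum_weight /Ktot; apply/eq_leq/eq_bigr => i _; exact/eqP/Hb.
Qed.

Lemma val_cm (b : TB) p : in_basis b ->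
  (cm b p : nat) = if psize p == 0 then 0 else cnt (row b) p.
Proof.
move=> Hb; rewrite ffunE inordK //; case: ifPn => // np.
by rewrite ltnS cnt_le.
Qed.

Lemma msetpart_cm (b : TB) : in_basis b -> is_msetpart (cm b).
Proof.
move=> Hb; apply/andP; split.
  by apply/forallP => p; apply/implyP => p0s; rewrite val_cm // p0s.
apply/forallP => i.
have -> : \sum_(p : PT) (cm b p : nat) * p i = \sum_(p : PT) cnt (row b) p * p i.
  apply: eq_bigr => p _; rewrite val_cm //; case: ifPn => // /eqP ps.
  by move: (le_psize p i); rewrite ps leqn0 => /eqP ->; rewrite !muln0.
rewrite -(sum_rows (row b) (fun p => (p i : nat))).
move/forallP: Hb => /(_ i) /eqP <-.
by apply/eqP/eq_bigr => j _; rewrite ffunE.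
Qed.

Lemma nparts_cm (b : TB) : in_basis b -> nparts (cm b) <= n.
Proof.
move=> Hb; rewrite /nparts; apply: (@leq_trans (\sum_(p : PT) cnt (row b) p)); last by rewrite sum_cnt.
apply: leq_sum => p _.
by rewrite val_cm //; case: ifP.
Qed.

Lemma cm_inj (b b' : TB) : in_basis b -> in_basis b' -> cm b = cm b' ->
  exists s : 'S_n, b' = permB s b.
Proof.
move=> Hb Hb' E.
have Cnz p : p != p0 -> cnt (row b) p = cnt (row b') p.
  move=> np; move: (congr1 (fun c : MPart k => (c p : nat)) E) => /=.
  by rewrite !val_cm // psize0 (negbTE np).
have C p : cnt (row b) p = cnt (row b') p.
  case: (eqVneq p p0) => [->|]; last exact: Cnz.
  have S r : cnt r p0 = n - \sum_(q | q != p0) cnt r q.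
    by rewrite -(sum_cnt r) (bigD1 p0) //= addnK.
  by rewrite !S; congr (_ - _); apply: eq_bigr => q; apply: Cnz.
have : perm_eq (map (row b') (enum 'I_n)) [tuple row b j | j < n].
  rewrite /perm_eq; apply/seq.allP => p _ /=; apply/eqP.
  by rewrite !count_enum; exact: (esym (C p)).
case/tuple_permP => s Es.
exists (s^-1)%g; apply/ffunP => i; apply/ffunP => j.
have /eq_in_map Em : map (row b') (enum 'I_n) = map (fun i => tnth [tuple row b j | j < n] (s i)) (enum 'I_n) by exact: Es.
have Ej := Em j (mem_enum _ j).
by rewrite !ffunE invgK; move/ffunP: Ej => /(_ i); rewrite !ffunE tnth_mktuple ffunE.
Qed.


Definition Lc (c : MPart k) : seq PT := flatten [seq nseq (c p) p | p <- enum PT].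
Definition bc (c : MPart k) : TB := [ffun i : 'I_m => [ffun j : 'I_n => (nth p0 (Lc c) j) i]].

Lemma count_Lc c p : count_mem p (Lc c) = c p.
Proof.
rewrite /Lc count_flatten sumnE !big_map -enumT big_enum /= (bigD1 p) //=.
rewrite count_nseq /= eqxx mul1n big1 ?addn0 // => q nq.
by rewrite count_nseq /= (negbTE nq).
Qed.

Lemma size_Lc c : size (Lc c) = nparts c.
Proof.
rewrite /Lc size_flatten /shape sumnE !big_map -enumT big_enum /=.
by apply: eq_bigr => p _; rewrite size_nseq.
Qed.

Lemma row_bc c j : row (bc c) j = nth p0 (Lc c) j.
Proof. by apply/ffunP => i; rewrite !ffunE. Qed.

Lemma cnt_bc c p : nparts c <= n -> p != p0 -> cnt (row (bc c)) p = c p.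
Proof.
move=> Hn np; rewrite /cnt; under eq_bigr do rewrite row_bc.
rewrite -count_Lc.
apply: (@sum_nth_pad _ p0 (pred1 p) (Lc c) n); first by rewrite /= eq_sym.
by rewrite size_Lc.
Qed.

Lemma bc_basis c : is_msetpart c -> nparts c <= n -> in_basis (bc c).
Proof.
move=> /andP[_ /forallP Hc] Hn; apply/forallP => i.
have -> : mdeg (bc c i) = \sum_(j < n) (row (bc c) j i : nat).
  by apply: eq_bigr => j _; rewrite !ffunE.
rewrite (sum_rows (row (bc c)) (fun p => (p i : nat))).
rewrite -(eqP (Hc i)); apply/eqP/eq_bigr => p _.
case: (eqVneq p p0) => [->|np]; first by rewrite ffunE /= !muln0.
by rewrite cnt_bc.
Qed.

Lemma cm_bc c : is_msetpart c -> nparts c <= n -> cm (bc c) = c.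
Proof.
move=> Hc Hn; apply/ffunP => p; apply/val_inj => /=.
rewrite val_cm ?bc_basis //; case: ifPn => ps.
  move: Hc => /andP[/forallP /(_ p) /implyP /(_ ps) /eqP -> _] //.
by rewrite cnt_bc // -psize0.
Qed.

Lemma in_basis_permB s (b : TB) : in_basis (permB s b) = in_basis b.
Proof.
apply: eq_forallb => i; congr (_ == _).
rewrite /mdeg; under eq_bigr do rewrite !ffunE.
exact: (sum_perm (s^-1)%g (fun j => (b i j : nat))).
Qed.

Lemma image_tensor :
  [set cm b | b in (@in_basis n m k : pred TB)] =
  [set c : MPart k | is_msetpart c && (nparts c <= n)].
Proof.
apply/setP => c; rewrite inE; apply/imsetP/andP => [[b Hb ->]|[Hc Hn]].
  by split; [apply: msetpart_cm | apply: nparts_cm].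
by exists (bc c); [exact: bc_basis | rewrite cm_bc].
Qed.

End Comb.

Lemma sum_eq_le1 N y : \sum_(x < N) (y == x :> nat) <= 1.
Proof.
case: (ltnP y N) => [lt|ge].
  rewrite (bigD1 (Ordinal lt)) //= eqxx big1 // => x nx.
  case: eqP => // e; case/eqP: nx; apply: val_inj; by rewrite /= e.
by rewrite big1 // => x _; case: eqP => // e; move: (ltn_ord x); rewrite -e ltnNge ge.
Qed.

Lemma sum_count_le N (s : seq nat) : \sum_(x < N) count_mem (x : nat) s <= size s.
Proof.
elim: s => [|y s IH] /=; first by rewrite big1.
rewrite big_split /= -add1n leq_add //.
exact: sum_eq_le1.
Qed.

Section Mu.
Variables (n m : nat) (k : 'I_m -> nat).
Local Notation TB := (TBasis n k).
Local Notation K := (Ktot k).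
Local Notation PT := (Part k).

Definition Pmu (mu : seq nat) (b : TB) : bool :=
  in_basis b && [exists s : 'S_n, [forall j, weight b j == padded mu (s j)]].

Lemma weight_permB s (b : TB) j : weight (permB s b) j = weight b ((s^-1)%g j).
Proof. by apply: eq_bigr => i _; rewrite !ffunE. Qed.

Lemma permBK s (b : TB) : permB (s^-1)%g (permB s b) = b.
Proof. by apply/ffunP => i; apply/ffunP => j; rewrite !ffunE invgK permK. Qed.

Lemma Pmu_permB mu s (b : TB) : Pmu mu (permB s b) = Pmu mu b.
Proof.
suff H s' (b' : TB) : Pmu mu b' -> Pmu mu (permB s' b').
  apply/idP/idP; last exact: H.
  by move/(H (s^-1)%g); rewrite permBK.
case/andP => Hb /existsP[σ /forallP Hσ]; rewrite /Pmu in_basis_permB Hb /=.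
apply/existsP; exists (s'^-1 * σ)%g; apply/forallP => j.
by rewrite weight_permB permM; exact: Hσ.
Qed.

Lemma symweight_eq mu :
  symweight n k mu = <<[seq delta b | b <- enum TB & Pmu mu b]>>%VS.
Proof.
apply/eqP; rewrite eqEsubv; apply/andP; split.
  apply/subv_sumP => σ _; apply/subvP => f.
  rewrite (mem_spanP (fun b => in_basis b && [forall j, weight b j == padded mu (σ j)])).
  rewrite (mem_spanP (Pmu mu)) => /forallP H; apply/forallP => b; apply/implyP => nb.
  apply: (implyP (H b)); apply: contra nb => /andP[Hb Hw].
  by rewrite /Pmu Hb /=; apply/existsP; exists σ.
apply/span_subvP => x /mapP [b]; rewrite mem_filter => /andP[/andP[Hb /existsP[σ Hσ]] _] ->.
rewrite memvE; apply: (sumv_sup σ) => //; rewrite -memvE; apply: memv_span.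
by apply: map_f; rewrite mem_filter Hb Hσ mem_enum.
Qed.


Lemma has_sizes_cm mu (b : TB) : 0 \notin mu -> size mu <= n -> Pmu mu b -> has_sizes mu (cm b).
Proof.
move=> mu0 smu /andP[Hb /existsP[σ /forallP Hσ]]; apply/forallP => x.
case: (eqVneq (x : nat) 0) => [x0|x0].
  rewrite x0; move/count_memPn: mu0 => ->; rewrite big1 // => p /eqP ps.
  by rewrite val_cm // ps.
have -> : \sum_(p : PT | psize p == x) (cm b p : nat) = \sum_(p : PT) cnt (row b) p * (psize p == x).
  rewrite big_mkcond /=; apply: eq_bigr => p _; case: eqP => ps.
    by rewrite val_cm // ps (negbTE x0) muln1.
  by rewrite muln0.
rewrite -(sum_rows (row b) (fun p => (psize p == x : nat))).
under eq_bigr do rewrite psize_row (eqP (Hσ _)).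
rewrite (sum_perm σ (fun j => (padded mu j == x : nat))).
apply/eqP; apply: (@sum_nth_pad _ 0 (pred1 (x : nat)) mu n) => //.
by rewrite /= eq_sym.
Qed.

Lemma psize_bound (c : MPart k) p : is_msetpart c -> c p != 0 :> nat -> psize p <= K.
Proof.
case/andP => _ /forallP Hc cp.
apply: (@leq_trans (c p * psize p)); first by rewrite leq_pmull // lt0n.
have E : \sum_(q : PT) c q * psize q = K.
  rewrite [RHS]/Ktot; under [RHS]eq_bigr do rewrite -(eqP (Hc _)).
  rewrite exchange_big; apply: eq_bigr => q _; by rewrite big_distrr.
by rewrite -[X in _ <= X]E (bigD1 p) //= leq_addr.
Qed.

Lemma nparts_mu mu (c : MPart k) : size mu <= n -> is_msetpart c -> has_sizes mu c ->
  nparts c <= n.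
Proof.
move=> smu Hc /forallP Hs; apply: leq_trans smu.
have -> : nparts c = \sum_(p : PT) \sum_(x < K.+1) (psize p == x) * c p.
  apply: eq_bigr => p _.
  case: (eqVneq (c p : nat) 0) => [->|cp]; first by rewrite big1 // => x _; rewrite muln0.
  have lp : psize p < K.+1 by rewrite ltnS (psize_bound Hc cp).
  rewrite (bigD1 (Ordinal lp)) //= eqxx mul1n big1 ?addn0 // => x nx.
  case: eqP => // e; case/eqP: nx; apply: val_inj; by rewrite /= e.
rewrite exchange_big /=.
have -> : \sum_(x < K.+1) \sum_(p : PT) (psize p == x) * c p = \sum_(x < K.+1) count_mem (x : nat) mu.
  apply: eq_bigr => x _; rewrite -(eqP (Hs x)) [RHS]big_mkcond /=.
  by apply: eq_bigr => p _; case: eqP => _; rewrite ?mul1n ?mul0n.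
exact: sum_count_le.
Qed.

Lemma Pmu_bc mu (c : MPart k) : 0 \notin mu -> sumn mu = K -> size mu <= n ->
  is_msetpart c -> has_sizes mu c -> Pmu mu (bc n c).
Proof.
move=> mu0 smK smu Hc Hs.
have Hn := nparts_mu smu Hc Hs.
rewrite /Pmu bc_basis //=.
have : perm_eq (map (weight (bc n c)) (enum 'I_n)) [tuple padded mu j | j < n].
  apply: (perm_eq_but (z := 0)); first by rewrite size_map size_enum_ord size_tuple.
  move=> x x0; rewrite !count_enum.
  rewrite (@sum_nth_pad _ 0 (pred1 x) mu n) ?smu //; last by rewrite /= eq_sym.
  under eq_bigr do rewrite -psize_row.
  rewrite (sum_rows (row (bc n c)) (fun p => (psize p == x : nat))).
  have -> : \sum_(p : PT) cnt (row (bc n c)) p * (psize p == x) = \sum_(p : PT) c p * (psize p == x).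
    apply: eq_bigr => p _; case: (eqVneq p (p0 k)) => [->|np]; last by rewrite cnt_bc.
    rewrite (_ : psize (p0 k) = 0); first by rewrite eq_sym (negbTE x0) !muln0.
    by rewrite /psize big1 // => i _; rewrite ffunE.
  case: (ltnP x K.+1) => [lx|gx].
    move/forallP: Hs => /(_ (Ordinal lx)) /eqP /= <-.
    by rewrite [RHS]big_mkcond /=; apply: eq_bigr => p _; case: eqP => _; rewrite ?muln1 ?muln0.
  rewrite big1; last first.
    move=> p _; case: (eqVneq (c p : nat) 0) => [->|cp] //.
    have := psize_bound Hc cp; case: eqP => [->|]; last by rewrite muln0.
    by rewrite leqNgt gx.
  apply/esym/count_memPn; apply/negP => /mem_le_sumn; rewrite smK leqNgt gx //.
case/tuple_permP => σ Es; apply/existsP; exists σ; apply/forallP => j.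
have /eq_in_map Em : map (weight (bc n c)) (enum 'I_n) = map (fun i => tnth [tuple padded mu j | j < n] (σ i)) (enum 'I_n) by exact: Es.
by rewrite (Em j (mem_enum _ j)) tnth_mktuple.
Qed.

Lemma image_mu mu : 0 \notin mu -> sumn mu = K -> size mu <= n ->
  [set cm b | b in (Pmu mu : pred TB)] =
  [set c : MPart k | is_msetpart c && has_sizes mu c].
Proof.
move=> mu0 smK smu.
apply/setP => c; rewrite inE; apply/imsetP/andP => [[b Hb ->]|[Hc Hs]].
  split; [apply: msetpart_cm; by case/andP: Hb | exact: has_sizes_cm].
have Hn := nparts_mu smu Hc Hs.
by exists (bc n c); [exact: Pmu_bc | rewrite cm_bc].
Qed.

End Mu.

Theorem corollary3p12 (n m : nat) (k : 'I_m -> nat) :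
  (forall mu : seq nat,
     sorted geq mu -> 0 \notin mu -> sumn mu = (\sum_(i < m) k i)%N ->
     size mu <= n ->
     \dim (invariants (symweight n k mu)) =
       #|[set c : MPart k | is_msetpart c && has_sizes mu c]|)
  /\
  \dim (invariants (symtensor n k)) =
    #|[set c : MPart k | is_msetpart c && (nparts c <= n)]|.
Proof.
split.
  move=> mu _ mu0 smK smu.
  rewrite -(image_mu mu0 smK smu).
  apply: dim_inv.
  - by move=> f; rewrite symweight_eq mem_spanP.
  - exact: Pmu_permB.
  - exact: cm_permB.
  - by move=> b b' /andP[Hb _] /andP[Hb' _]; apply: cm_inj.
rewrite -image_tensor; apply: dim_inv.
- by move=> f; rewrite mem_spanP.
- exact: in_basis_permB.
- exact: cm_permB.
- exact: cm_inj.
Qed.
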